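(* For all integers $n,k\ge 0$, the unsigned Stirling numbers of the first kind satisfy $\left[{n \atop k}\right] \le \frac{2^n n!}{k!}$.
   Context: $\left[{n \atop k}\right]$ denotes the unsigned Stirling number of the first kind (number of permutations of $n$ elements with exactly $k$ cycles), satisfying $\left[{n+1 \atop k}\right] = n\left[{n \atop k}\right] + \left[{n \atop k-1}\right]$. *)

(* Defs.v *)
From mathcomp Require Import all_boot all_order all_algebra.
Set Implicit Arguments.
Unset Strict Implicit.
Unset Printing Implicit Defensive.

Fixpoint stirling1 (n k : nat) : nat :=
  match n, k with
  | 0, 0 => 1
  | 0, _.+1 => 0
  | _.+1, 0 => 0
  | n'.+1, k'.+1 => n' * stirling1 n' k + stirling1 n' k'
  end.

(* Main.v *)
Require Import Defs.
From mathcomp Require Import all_boot all_order all_algebra zify ring.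
Import GRing.Theory Num.Theory.
Local Open Scope ring_scope.

Lemma st0 (n k : nat) : (n < k)%N -> stirling1 n k = 0%N.
Proof.
elim: n k => [|n IH] [|k] //= H.
rewrite !IH //; last exact: ltnW.
by rewrite muln0.
Qed.

Lemma stnat (n k : nat) : (stirling1 n k * k`! <= 2 ^ n * n`!)%N.
Proof.
elim: n k => [|n IH] [|k] //=.
have [lekn|ltnk] := leqP k n; last first.
  by rewrite (@st0 n k.+1 (ltnW ltnk)) (@st0 n k ltnk) muln0 !mul0n.
rewrite mulnDl factS expnS.
have H1 := IH k.+1. have H2 := IH k.
have E1 : (n * stirling1 n k.+1 * k.+1`! <= n * (2 ^ n * n`!))%N.
  by rewrite -mulnA leq_mul2l H1 orbT.
have E2 : (stirling1 n k * (k.+1 * k`!) <= k.+1 * (2 ^ n * n`!))%N.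
  by rewrite mulnCA leq_mul2l H2 orbT.
rewrite -factS in E2.
apply: leq_trans (leq_add E1 E2) _.
rewrite -mulnDl.
have : (n + k.+1 <= 2 * n.+1)%N by lia.
move=> H.
have := leq_mul2r (2 ^ n * n`!) (n + k.+1) (2 * n.+1); rewrite H orbT => /= H'.
apply: leq_trans H' _. apply: eq_leq; rewrite factS; ring.
Qed.

Theorem lemma1 (n k : nat) :
  (stirling1 n k)%:R <= ((2 ^ n * n`!)%N)%:R / (k`!)%:R :> rat.
Proof.
rewrite ler_pdivlMr ?ltr0n ?fact_gt0 // -natrM ler_nat.
exact: stnat.
Qed.
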